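(* For any utility profile $\mathbf{u}$, the game $G=(\mathcal{L},R^L,\mathbf{u})$ has the following properties: (1) If $\mathbf{b}$ is a PNE of $G$ then $|W(\mathbf{b})|\in\{1,m\}$. Moreover, $|W(\mathbf{b})|=m$ if and only if $\mathbf{b}$ is the trivial ballot vector and all voters rank $c_1$ first. (2) If $\mathbf{b}$ is a PNE of $G$ then there exists at most one voter $i$ with $b_i\neq\bot$. (3) $G$ admits a PNE if and only if all voters rank $c_1$ first (in which case $c_1$ is the unique PNE winner) or there exists a candidate $c_j$ with $j>1$ such that (i) $\mathrm{sc}(c_j,\mathbf{a})>0$ and (ii) for every $k<j$, all voters prefer $c_j$ to $c_k$. If such a candidate exists, he is unique, and wins in all PNE of $G$.
   Context: Let $C=\{c_1,\dots,c_m\}$ be a set of candidates and $N=\{1,\dots,n\}$ a set of voters. Each voter $i$ has an injective utility function $u_i:C\to\mathbb{N}$; $\mathbf{u}=(u_1,\dots,u_n)$. Voter $i$'s preference $\succ_i$ is $c\succ_i c'$ iff $u_i(c)>u_i(c')$; $a_i$ is $i$'s top candidate and $\mathbf{a}=(a_1,\dots,a_n)$ is the truthful ballot vector. A ballot vector is $\mathbf{b}=(b_1,\dots,b_n)$ with $b_i\in C\cup\{\bot\}$ ($\bot$ = abstain); it is trivial if all $b_i=\bot$. $(\mathbf{b}_{-i},b')$ denotes $\mathbf{b}$ with $b_i$ replaced by $b'$. The score is $\mathrm{sc}(c,\mathbf{b})=|\{i:b_i=c\}|$, $M(\mathbf{b})=\max_{c}\mathrm{sc}(c,\mathbf{b})$,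 and $W(\mathbf{b})=\{c:\mathrm{sc}(c,\mathbf{b})=M(\mathbf{b})\}$ (so $W(\mathbf{b})=C$ for the trivial ballot). Under the lexicographic tie-breaking rule $R^L$, the winner is the $c_j\in W(\mathbf{b})$ with smallest index $j$. Fix $0<\varepsilon<\min\{1/m,1/n\}$. In the lazy setting $\mathcal{L}$, if $c$ is the winner of $\mathbf{b}$, voter $i$'s utility is $U_i(\mathbf{b})=u_i(c)$ if $b_i\in C$ and $u_i(c)+\varepsilon$ if $b_i=\bot$. The game $(\mathcal{L},R^L,\mathbf{u})$ has players $N$, action set $C\cup\{\bot\}$ for each. A ballot vector $\mathbf{b}$ is a pure Nash equilibrium (PNE) if $U_i(\mathbf{b})\ge U_i(\mathbf{b}_{-i},b')$ for all $i\in N$ and all $b'\in C\cup\{\bot\}$. *)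

(* Defs.v *)
From HB Require Import structures.
From mathcomp Require Import all_boot all_order all_algebra.
Set Implicit Arguments. Unset Strict Implicit. Unset Printing Implicit Defensive.
Import Order.TTheory GRing.Theory Num.Theory.

(* Voters are 'I_n, candidates are 'I_m (candidate c_{j+1} of the paper is the
   ordinal j, so c_1 is the ordinal with value 0).  A ballot of a voter is an
   [option 'I_m]: [None] is abstention (bottom). *)
Definition ballot (n m : nat) := 'I_n -> option 'I_m.

Definition sc n m (b : ballot n m) (c : 'I_m) : nat := #|[set i | b i == Some c]|.

Definition Msc n m (b : ballot n m) : nat := \max_(c : 'I_m) sc b c.

Definition Wset n m (b : ballot n m) : {set 'I_m} := [set c | sc b c == Msc b].

(* lexicographic tie-breaking R^L: the element of W(b) of smallest index
   (always [Some _] when m > 0). *)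
Definition winnerL n m (b : ballot n m) : option 'I_m :=
  [pick c in Wset b | [forall c' in Wset b, (c <= c')%N]].

Definition dev n m (b : ballot n m) (i : 'I_n) (x : option 'I_m) : ballot n m :=
  fun j => if j == i then x else b j.

Definition Ulazy (R : numDomainType) n m (eps : R) (u : 'I_n -> 'I_m -> nat)
    (b : ballot n m) (i : 'I_n) : R :=
  ((if winnerL b is Some c then (u i c)%:R else 0) + (if b i is None then eps else 0))%R.

Definition is_PNE (R : numDomainType) n m (eps : R) (u : 'I_n -> 'I_m -> nat)
    (b : ballot n m) : Prop :=
  forall (i : 'I_n) (x : option 'I_m), (Ulazy eps u (dev b i x) i <= Ulazy eps u b i)%R.

Definition prefers n m (u : 'I_n -> 'I_m -> nat) (i : 'I_n) (c c' : 'I_m) : bool :=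
  (u i c' < u i c)%N.

Definition truthful n m (u : 'I_n -> 'I_m -> nat) : ballot n m :=
  fun i => [pick c | [forall c', (u i c' <= u i c)%N]].

Definition all_c1_first n m (u : 'I_n -> 'I_m -> nat) : Prop :=
  forall (i : 'I_n) (c c' : 'I_m), val c = 0%N -> c' != c -> prefers u i c c'.

Definition cond3 n m (u : 'I_n -> 'I_m -> nat) (j : 'I_m) : Prop :=
  [/\ (0 < val j)%N, (0 < sc (truthful u) j)%N &
      forall (k : 'I_m), (val k < val j)%N -> forall i : 'I_n, prefers u i j k].

(* Main.v *)
Require Import Defs.
From mathcomp Require Import all_boot all_order all_algebra.
From mathcomp Require Import lra.
Import Order.TTheory GRing.Theory Num.Theory.
Set Implicit Arguments. Unset Strict Implicit.

Lemma sc0 n m (b : ballot n m) c : (forall k, b k != Some c) -> sc b c = 0%N.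
Proof.
move=> H; apply/eqP; rewrite cards_eq0; apply/eqP/setP=> k.
by rewrite !inE (negbTE (H k)).
Qed.

Lemma sc_le1 n m (b : ballot n m) c i :
  (forall k, b k = Some c -> k = i) -> (sc b c <= 1)%N.
Proof.
move=> H; rewrite /sc -(cards1 i); apply: subset_leq_card; apply/subsetP=> k.
by rewrite !inE => /eqP/H ->.
Qed.

Lemma sc_gt0 n m (b : ballot n m) c k : b k = Some c -> (0 < sc b c)%N.
Proof. by move=> H; rewrite /sc card_gt0; apply/set0Pn; exists k; rewrite inE H. Qed.

Lemma sc_sub n m (b b' : ballot n m) c :
  (forall k, b' k = Some c -> b k = Some c) -> (sc b' c <= sc b c)%N.
Proof.
move=> H; apply: subset_leq_card; apply/subsetP=> k.
by rewrite !inE => /eqP/H ->.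
Qed.

Lemma sc_eq n m (b b' : ballot n m) c :
  (forall k, (b' k == Some c) = (b k == Some c)) -> sc b' c = sc b c.
Proof. by move=> H; rewrite /sc; apply: eq_card => k; rewrite !inE H. Qed.

Lemma Msc_eq n m (b : ballot n m) c :
  (forall c', sc b c' <= sc b c)%N -> Msc b = sc b c.
Proof.
move=> H; apply/eqP; rewrite eqn_leq; apply/andP; split.
  by apply/bigmax_leqP => c' _; exact: H.
by rewrite /Msc (bigD1 c) //= leq_maxl.
Qed.

Lemma win_eq n m (b : ballot n m) c :
  (forall c', sc b c' <= sc b c)%N ->
  (forall c' : 'I_m, (c' < c)%N -> sc b c' < sc b c)%N -> winnerL b = Some c.
Proof.
move=> H1 H2; rewrite /winnerL.
have WE : forall c', (c' \in Wset b) = (sc b c' == sc b c).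
  by move=> c'; rewrite /Wset inE (Msc_eq H1).
case: pickP => [x /andP[xW /forallP xmin] | H].
- have cW : c \in Wset b by rewrite WE.
  have xc := implyP (xmin c) cW.
  congr Some; apply/val_inj/eqP; rewrite eqn_leq xc /=.
  rewrite WE in xW; rewrite leqNgt; apply/negP => /H2; by rewrite (eqP xW) ltnn.
- exfalso; move: (H c); rewrite WE eqxx /= => /negP; apply.
  apply/forallP => c'; apply/implyP; rewrite WE => /eqP e.
  by rewrite leqNgt; apply/negP => /H2; rewrite e ltnn.
Qed.

Lemma winP n m (b : ballot n m) w : winnerL b = Some w ->
  (forall c', sc b c' <= sc b w)%N /\ (forall c' : 'I_m, (c' < w)%N -> sc b c' < sc b w)%N.
Proof.
rewrite /winnerL; case: pickP => // x /andP[xW /forallP xmin] [<-].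
have hM : forall c', (sc b c' <= sc b x)%N.
  move=> c'; rewrite /Wset inE in xW; rewrite (eqP xW).
  by rewrite /Msc (bigD1 c') //= leq_maxl.
split=> // c' lt; rewrite ltn_neqAle hM andbT; apply/negP=> /eqP e.
have : c' \in Wset b by move: xW; rewrite /Wset !inE e.
move/(implyP (xmin c')); by rewrite leqNgt lt.
Qed.

Lemma win_ex n m (b : ballot n m) : (0 < m)%N -> exists w, winnerL b = Some w.
Proof.
move=> hm.
have [c0 Hc0] := @bigop.eq_bigmax (ordinal m) (fun c => sc b c) (ltac:(by rewrite card_ord)).
have H0 : forall c', (sc b c' <= sc b c0)%N.
  by move=> c'; rewrite -Hc0 (bigD1 c') //= leq_maxl.
pose P k := [exists c : 'I_m, (val c == k) && (sc b c == sc b c0)].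
have exP : exists k, P k by exists (val c0); apply/existsP; exists c0; rewrite !eqxx.
case: (ex_minnP exP) => k /existsP[c /andP[/eqP ck /eqP e]] kmin.
exists c; apply: win_eq => [c'|c' lt]; first by rewrite e.
rewrite ltn_neqAle e H0 andbT; apply/negP => /eqP e'.
have : P (val c') by apply/existsP; exists c'; rewrite eqxx e' /=.
by move/kmin; rewrite -ck leqNgt lt.
Qed.

Lemma win_triv n m (b : ballot n m) (c0 : 'I_m) :
  (forall k, b k = None) -> val c0 = 0%N -> winnerL b = Some c0.
Proof.
move=> H h0; have Z : forall c, sc b c = 0%N by move=> c; apply: sc0 => k; rewrite H.
by apply: win_eq => [c'|c']; rewrite ?Z ?h0.
Qed.

Lemma win_single n m (b : ballot n m) i w :
  b i = Some w -> (forall k, k != i -> b k = None) -> winnerL b = Some w.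
Proof.
move=> Hi H.
have Z : forall c, c != w -> sc b c = 0%N.
  move=> c cw; apply: sc0 => k; case: (eqVneq k i) => [->|ki]; last by rewrite H.
  by rewrite Hi; apply/eqP => -[e]; rewrite e eqxx in cw.
have P := sc_gt0 Hi.
apply: win_eq => [c'|c' lt].
  by case: (eqVneq c' w) => [->//|cw]; rewrite Z.
by rewrite Z // neq_ltn lt.
Qed.

Lemma win_two n m (b : ballot n m) i k j c :
  b i = Some j -> b k = Some c -> k != i ->
  (forall l, l != i -> l != k -> b l = None) ->
  winnerL b = Some (if (c < j)%N then c else j).
Proof.
move=> Hi Hk ki H.
have Z : forall c', c' != j -> c' != c -> sc b c' = 0%N.
  move=> c' c'j c'c; apply: sc0 => l.
  case: (eqVneq l i) => [->|li]; first by rewrite Hi; apply/eqP => -[e]; rewrite e eqxx in c'j.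
  case: (eqVneq l k) => [->|lk]; first by rewrite Hk; apply/eqP => -[e]; rewrite e eqxx in c'c.
  by rewrite H.
have Pj := sc_gt0 Hi; have Pc := sc_gt0 Hk.
case: ifP => lt.
- have cj : c != j by rewrite neq_ltn lt.
  have Lj : (sc b j <= 1)%N.
    apply: (sc_le1 (i:=i)) => l; case: (eqVneq l i) => // li.
    case: (eqVneq l k) => [->|lk]; first by rewrite Hk => -[e]; rewrite e eqxx in cj.
    by rewrite H.
  apply: win_eq => [c'|c' lt'].
    case: (eqVneq c' c) => [->//|c'c]; case: (eqVneq c' j) => [->|c'j]; last by rewrite Z.
    exact: leq_trans Lj Pc.
  rewrite Z //; first by rewrite neq_ltn (ltn_trans lt' lt).
  by rewrite neq_ltn lt'.
- apply: win_eq => [c'|c' lt'].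
    case: (eqVneq c' j) => [->//|c'j]; case: (eqVneq c' c) => [ec|c'c]; last by rewrite Z.
    rewrite ec in c'j *; have Lc : (sc b c <= 1)%N.
      apply: (sc_le1 (i:=k)) => l; case: (eqVneq l k) => // lk.
      case: (eqVneq l i) => [->|li]; first by rewrite Hi => -[e]; rewrite e eqxx in c'j.
      by rewrite H.
    exact: leq_trans Lc Pj.
  rewrite Z //; first by rewrite neq_ltn lt'.
  by rewrite neq_ltn (leq_trans lt') // leqNgt lt.
Qed.

Section Num.
Variable R : realFieldType.
Local Open Scope ring_scope.
Lemma N1 (eps : R) (a b : nat) : eps < 1 -> (a%:R <= b%:R + eps :> R) -> (a <= b)%N.
Proof.
move=> e1 H; rewrite leqNgt; apply/negP => lt.
have : (b.+1)%:R <= a%:R :> R by rewrite ler_nat.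
rewrite -addn1 natrD; lra.
Qed.
Lemma N2 (eps : R) (a b : nat) : 0 < eps -> (a%:R + eps <= b%:R :> R) -> (a < b)%N.
Proof.
move=> e0 H; rewrite ltnNge; apply/negP => le.
have : b%:R <= a%:R :> R by rewrite ler_nat.
lra.
Qed.
Lemma N3 (eps : R) (a b : nat) : 0 < eps -> (a <= b)%N -> (a%:R <= b%:R + eps :> R).
Proof. move=> e0 H; have : a%:R <= b%:R :> R by rewrite ler_nat. lra. Qed.
Lemma N4 (eps : R) (a b : nat) : eps < 1 -> (a < b)%N -> (a%:R + eps <= b%:R :> R).
Proof.
move=> e1 H; have : (a.+1)%:R <= b%:R :> R by rewrite ler_nat.
rewrite -addn1 natrD; lra.
Qed.
End Num.

Lemma U_eq (R : numDomainType) n m (eps : R) u (b : ballot n m) i w :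
  winnerL b = Some w ->
  Ulazy eps u b i = ((u i w)%:R + (if b i is None then eps else 0))%R.
Proof. by rewrite /Ulazy => ->. Qed.

Lemma dev_ii n m (b : ballot n m) i x : dev b i x i = x.
Proof. by rewrite /dev eqxx. Qed.
Lemma dev_ki n m (b : ballot n m) i x k : k != i -> dev b i x k = b k.
Proof. by rewrite /dev => /negbTE ->. Qed.

Lemma pne_shape (R : realFieldType) n m (eps : R) u (b : ballot n m) :
  (0 < m)%N -> (0 < eps)%R -> is_PNE eps u b ->
  (forall k, b k = None) \/
  exists i w, b i = Some w /\ forall k, k != i -> b k = None.
Proof.
move=> hm e0 HP.
case: (win_ex b hm) => w hw; have [H1 H2] := winP hw.
have A : forall k c, b k = Some c -> c = w.
  move=> k c bk; apply/eqP; apply/negPn/negP => cw.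
  have hw' : winnerL (dev b k None) = Some w.
    have E : sc (dev b k None) w = sc b w.
      apply: sc_eq => l; rewrite /dev; case: (eqVneq l k) => [->|//].
      by rewrite bk (inj_eq Some_inj) (negbTE cw).
    have S c' : (sc (dev b k None) c' <= sc b c')%N.
      by apply: sc_sub => l; rewrite /dev; case: ifP.
    apply: win_eq => [c'|c' lt]; rewrite E.
      exact: leq_trans (S c') (H1 c').
    exact: leq_ltn_trans (S c') (H2 c' lt).
  have := HP k None; rewrite (U_eq _ _ _ hw') (U_eq _ _ _ hw) dev_ii bk.
  by move=> h; lra.
case: (pickP (fun k => b k != None)) => [i /= bi | N]; last first.
  by left => k; move/negbFE/eqP: (N k).
right; case E: (b i) bi => [c|//] _; have cw := A _ _ E; subst c.
exists i, w; split=> // k ki; case Ek: (b k) => [c|//]; exfalso.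
have cw := A _ _ Ek; subst c.
have hw' : winnerL (dev b i None) = Some w.
  have Z : forall c, c != w -> sc (dev b i None) c = 0%N.
    move=> c cw; apply: sc0 => l; rewrite /dev; case: ifP => [_|_] //.
    case El: (b l) => [c'|//]; rewrite (A _ _ El) (inj_eq Some_inj) eq_sym //.
  have P : (0 < sc (dev b i None) w)%N by apply: (sc_gt0 (k:=k)); rewrite dev_ki.
  apply: win_eq => [c'|c' lt].
    by case: (eqVneq c' w) => [->//|cw]; rewrite Z.
  by rewrite Z // neq_ltn lt.
have := HP i None; rewrite (U_eq _ _ _ hw') (U_eq _ _ _ hw) dev_ii E.
by move=> h; lra.
Qed.

Lemma pne_triv_c1 (R : realFieldType) n m (eps : R) u (b : ballot n m) :
  (forall i, injective (u i)) -> (0 < eps)%R -> (eps < 1)%R ->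
  is_PNE eps u b -> (forall k, b k = None) -> all_c1_first u.
Proof.
move=> hu e0 e1 HP H i c c' c0 cc.
have hw := win_triv H c0.
have hw' : winnerL (dev b i (Some c')) = Some c'.
  apply: (win_single (i:=i)); first by rewrite dev_ii.
  by move=> k ki; rewrite dev_ki.
have := HP i (Some c'); rewrite (U_eq _ _ _ hw') (U_eq _ _ _ hw) dev_ii H addr0.
move/(N1 e1) => le; rewrite /prefers ltn_neqAle le andbT.
by apply: contra cc => /eqP/hu ->.
Qed.

Lemma pne_single_cond3 (R : realFieldType) n m (eps : R) u (b : ballot n m) i w :
  (0 < m)%N -> (forall i, injective (u i)) -> (0 < eps)%R -> (eps < 1)%R ->
  is_PNE eps u b -> b i = Some w -> (forall k, k != i -> b k = None) -> cond3 u w.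
Proof.
move=> hm hu e0 e1 HP Hi H.
have hw := win_single Hi H.
pose c0 : 'I_m := Ordinal hm.
have a0 : (u i c0 < u i w)%N.
  have hw' : winnerL (dev b i None) = Some c0.
    apply: win_triv => //= k; case: (eqVneq k i) => [->|ki]; rewrite ?dev_ii //.
    by rewrite dev_ki // H.
  have := HP i None; rewrite (U_eq _ _ _ hw') (U_eq _ _ _ hw) dev_ii Hi addr0.
  exact: N2 e0.
have top : forall c, (u i c <= u i w)%N.
  move=> c; have hw' : winnerL (dev b i (Some c)) = Some c.
    apply: (win_single (i:=i)); first by rewrite dev_ii.
    by move=> k ki; rewrite dev_ki // H.
  have := HP i (Some c); rewrite (U_eq _ _ _ hw') (U_eq _ _ _ hw) dev_ii Hi !addr0.
  by rewrite ler_nat.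
split.
- rewrite lt0n; apply/negP => /eqP w0.
  have : c0 = w by apply: val_inj.
  by move=> e; rewrite e ltnn in a0.
- apply: (sc_gt0 (k:=i)); rewrite /truthful; case: pickP => [x /forallP hx|N].
    congr Some; apply: (hu i); apply/eqP; rewrite eqn_leq top /=.
    exact: hx.
  by move: (N w) => /negP; case; apply/forallP => c'; exact: top.
- move=> k lt l; rewrite /prefers.
  have kw : k != w by rewrite neq_ltn lt.
  case: (eqVneq l i) => [->|li].
    rewrite ltn_neqAle top andbT; apply: contra kw => /eqP e.
    by apply/eqP; apply: (hu i).
  have hw' : winnerL (dev b l (Some k)) = Some k.
    have := @win_two _ _ (dev b l (Some k)) i l w k.
    rewrite lt; apply.
    - by rewrite dev_ki // eq_sym.
    - by rewrite dev_ii.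
    - done.
    - by move=> l' l'i l'l; rewrite dev_ki // H.
  have := HP l (Some k); rewrite (U_eq _ _ _ hw') (U_eq _ _ _ hw) dev_ii H // addr0.
  move/(N1 e1) => le; rewrite ltn_neqAle le andbT.
  by apply: contra kw => /eqP/hu ->.
Qed.

Lemma exist_triv (R : realFieldType) n m (eps : R) u :
  (0 < m)%N -> (0 < eps)%R ->
  all_c1_first u -> is_PNE eps u (fun _ : 'I_n => None : option 'I_m).
Proof.
move=> hm e0 H i x.
pose c0 : 'I_m := Ordinal hm.
have hw := @win_triv _ _ (fun _ : 'I_n => None : option 'I_m) c0 (fun _ => erefl) erefl.
rewrite (U_eq _ _ _ hw) /=.
case: x => [c|].
- have hw' : winnerL (dev (fun _ : 'I_n => None : option 'I_m) i (Some c)) = Some c.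
    apply: (win_single (i:=i)); first by rewrite dev_ii.
    by move=> k ki; rewrite dev_ki.
  rewrite (U_eq _ _ _ hw') dev_ii addr0; apply: N3 => //.
  case: (eqVneq c c0) => [->//|cc0].
  exact: ltnW (H i c0 c erefl cc0).
- have hw' : winnerL (dev (fun _ : 'I_n => None : option 'I_m) i None) = Some c0.
    by apply: win_triv => // k; rewrite /dev; case: ifP.
  by rewrite (U_eq _ _ _ hw') dev_ii.
Qed.

Lemma truthful_top n m u (i : 'I_n) (j : 'I_m) :
  truthful u i = Some j -> forall c, (u i c <= u i j)%N.
Proof.
rewrite /truthful; case: pickP => // x /forallP hx [<-] c; exact: hx.
Qed.

Lemma exist_cond3 (R : realFieldType) n m (eps : R) u (j : 'I_m) :
  (0 < m)%N -> (0 < eps)%R -> (eps < 1)%R ->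
  cond3 u j -> exists b : ballot n m, is_PNE eps u b.
Proof.
move=> hm e0 e1 [j0 sj pj].
move: sj; rewrite /sc card_gt0 => /set0Pn[i0]; rewrite inE => /eqP ti0.
have top := truthful_top ti0.
pose b : ballot n m := fun k => if k == i0 then Some j else None.
have bi0 : b i0 = Some j by rewrite /b eqxx.
have bk : forall k, k != i0 -> b k = None by move=> k /negbTE; rewrite /b => ->.
have hw := win_single bi0 bk.
pose c0 : 'I_m := Ordinal hm.
exists b => k x; rewrite (U_eq _ _ _ hw).
case: (eqVneq k i0) => [->|ki].
- rewrite bi0 addr0; case: x => [c|].
  + have hw' : winnerL (dev b i0 (Some c)) = Some c.
      apply: (win_single (i:=i0)); first by rewrite dev_ii.
      by move=> k' ki; rewrite dev_ki // bk.
    by rewrite (U_eq _ _ _ hw') dev_ii addr0 ler_nat.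
  + have hw' : winnerL (dev b i0 None) = Some c0.
      apply: win_triv => // k'; case: (eqVneq k' i0) => [->|ki]; first by rewrite dev_ii.
      by rewrite dev_ki // bk.
    rewrite (U_eq _ _ _ hw') dev_ii; apply: N4 => //.
    exact: (pj c0 j0 i0).
- rewrite bk //; case: x => [c|].
  + have hw' := @win_two _ _ (dev b k (Some c)) i0 k j c.
    rewrite (U_eq _ _ _ (hw' _ _ ki _)) ?dev_ii ?addr0; first last.
    * by move=> l li lk; rewrite dev_ki // bk.
    * done.
    * by rewrite dev_ki // eq_sym.
    apply: N3 => //; case: ifP => // lt.
    exact: ltnW (pj c lt k).
  + have hw' : winnerL (dev b k None) = Some j.
      apply: (win_single (i:=i0)); first by rewrite dev_ki // eq_sym.
      by move=> k' k'i; case: (eqVneq k' k) => [->|k'k]; rewrite ?dev_ii // dev_ki // bk.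
    by rewrite (U_eq _ _ _ hw') dev_ii.
Qed.

Lemma cond3_uniq n m (u : 'I_n -> 'I_m -> nat) (j j' : 'I_m) :
  cond3 u j -> cond3 u j' -> j' = j.
Proof.
have K : forall a b : 'I_m, cond3 u a -> cond3 u b -> (a < b)%N -> False.
  move=> a c [_ sa _] [_ _ pc] lt.
  move: sa; rewrite /sc card_gt0 => /set0Pn[i0]; rewrite inE => /eqP ti0.
  have h2 := truthful_top ti0 c; have h1 := pc a lt i0; rewrite /prefers in h1.
  by have := leq_trans h1 h2; rewrite ltnn.
move=> Hj Hj'; apply: val_inj.
case: (ltngtP (val j') (val j)) => // lt.
  by case: (K _ _ Hj' Hj lt).
by case: (K _ _ Hj Hj' lt).
Qed.

Lemma Wset_triv n m (b : ballot n m) : (forall k, b k = None) -> Wset b = setT.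
Proof.
move=> T; have Z : forall c, sc b c = 0%N by move=> c; apply: sc0 => k; rewrite T.
apply/setP => c; rewrite /Wset !inE.
rewrite (@Msc_eq _ _ b c) ?Z // => c'; by rewrite !Z.
Qed.

Lemma Wset_single n m (b : ballot n m) i w :
  b i = Some w -> (forall k, k != i -> b k = None) -> Wset b = [set w].
Proof.
move=> Hi H.
have Z : forall c, c != w -> sc b c = 0%N.
  move=> c cw; apply: sc0 => k; case: (eqVneq k i) => [->|ki]; last by rewrite H.
  by rewrite Hi (inj_eq Some_inj) eq_sym.
have P := sc_gt0 Hi.
apply/setP => c; rewrite /Wset !inE (@Msc_eq _ _ b w).
  case: (eqVneq c w) => [->|cw]; first by rewrite eqxx.
  rewrite Z //; apply/negbTE; by rewrite eq_sym -lt0n.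
by move=> c'; case: (eqVneq c' w) => [->//|cw]; rewrite Z.
Qed.

Theorem theorem1 (R : realFieldType) (n m : nat) (eps : R)
  (u : 'I_n -> 'I_m -> nat)
  (hn : (0 < n)%N) (hm : (0 < m)%N)
  (hu : forall i : 'I_n, injective (u i))
  (heps0 : (0 < eps)%R) (hepsm : (eps < 1 / m%:R)%R) (hepsn : (eps < 1 / n%:R)%R) :
  (* (1) *)
  (forall b : ballot n m, is_PNE eps u b ->
     (#|Wset b| = 1%N \/ #|Wset b| = m) /\
     (#|Wset b| = m <-> (forall i, b i = None) /\ all_c1_first u)) /\
  (* (2) *)
  (forall b : ballot n m, is_PNE eps u b -> (#|[set i | b i != None]| <= 1)%N) /\
  (* (3) *)
  ((exists b : ballot n m, is_PNE eps u b) <->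
     all_c1_first u \/ exists j : 'I_m, cond3 u j) /\
  (all_c1_first u ->
     forall b : ballot n m, is_PNE eps u b -> omap val (winnerL b) = Some 0%N) /\
  (forall j : 'I_m, cond3 u j ->
     (forall j' : 'I_m, cond3 u j' -> j' = j) /\
     (forall b : ballot n m, is_PNE eps u b -> winnerL b = Some j)).
Proof.
have e1 : (eps < 1)%R.
  by apply: (lt_le_trans hepsm); rewrite ler_pdivrMr ?ltr0n // mul1r ler1n.
pose c0 : 'I_m := Ordinal hm.
pose i0 : 'I_n := Ordinal hn.
split.
  move=> b HP; case: (pne_shape hm heps0 HP) => [T | [i [w [Hi H]]]].
    have C : #|Wset b| = m by rewrite Wset_triv // cardsT card_ord.
    split; first by right.
    by split=> // _; split=> //; exact: (pne_triv_c1 hu heps0 e1 HP T).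
  have C : #|Wset b| = 1%N by rewrite (Wset_single Hi H) cards1.
  split; first by left.
  split; last by case=> T _; rewrite T in Hi.
  rewrite C => m1; have [w0 _ _] := pne_single_cond3 hm hu heps0 e1 HP Hi H.
  have lw : (val w < 1)%N by rewrite m1 ltn_ord.
  by move: w0; rewrite lt0n; move: lw; rewrite ltnS leqn0 => ->.
split.
  move=> b HP; case: (pne_shape hm heps0 HP) => [T | [i [w [Hi H]]]].
    rewrite (_ : [set i | b i != None] = set0) ?cards0 //.
    by apply/setP => k; rewrite !inE T.
  apply: (@leq_trans #|[set i]|); last by rewrite cards1.
  apply: subset_leq_card; apply/subsetP => k; rewrite !inE.
  by case: (eqVneq k i) => // ki; rewrite H.
split.
  split.
    case=> b HP; case: (pne_shape hm heps0 HP) => [T | [i [w [Hi H]]]].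
      by left; exact: (pne_triv_c1 hu heps0 e1 HP T).
    by right; exists w; exact: (pne_single_cond3 hm hu heps0 e1 HP Hi H).
  case=> [H | [j Hj]].
    by exists (fun _ => None); exact: exist_triv.
  exact: (exist_cond3 hm heps0 e1 Hj).
split.
  move=> H b HP; case: (pne_shape hm heps0 HP) => [T | [i [w [Hi H']]]].
    by rewrite (win_triv T (c0:=c0)).
  have [w0 _ pj] := pne_single_cond3 hm hu heps0 e1 HP Hi H'.
  have h1 := pj c0 w0 i.
  have wc : w != c0 by apply/negP => /eqP e; rewrite e in w0.
  have h2 := H i c0 w erefl wc.
  by move: h1 h2; rewrite /prefers => h1 h2; have := ltn_trans h1 h2; rewrite ltnn.
move=> j Hj; split; first by move=> j' Hj'; exact: (cond3_uniq Hj Hj').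
move=> b HP; case: (pne_shape hm heps0 HP) => [T | [i [w [Hi H']]]].
  have H := pne_triv_c1 hu heps0 e1 HP T.
  have [j0 _ pj] := Hj.
  have h1 := pj c0 j0 i0.
  have wc : j != c0 by apply/negP => /eqP e; rewrite e in j0.
  have h2 := H i0 c0 j erefl wc.
  by move: h1 h2; rewrite /prefers => h1 h2; have := ltn_trans h1 h2; rewrite ltnn.
have Hw := pne_single_cond3 hm hu heps0 e1 HP Hi H'.
rewrite (win_single Hi H'); congr Some; exact: (cond3_uniq Hj Hw).
Qed.
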